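(* Let $f:\mathbb{R}^n_{>0}\to\mathbb{R}^n_{>0}$ be order-preserving and homogeneous. The eigenspace $E(f)$ is nonempty and bounded in $(\mathbb{R}^n_{>0},d_H)$ if and only if for every nonempty proper subset $J\subset[n]$, $$r(f^J_0)<\lambda\big(f^{[n]\setminus J}_\infty\big).$$
   Context: $[n]=\{1,\dots,n\}$. For $x,y\in\mathbb{R}^n$, $x\le y$ means $y_i\ge x_i$ for all $i$. A map $f$ is order-preserving if $x\le y$ implies $f(x)\le f(y)$, and homogeneous if $f(tx)=tf(x)$ for all $t>0$. Hilbert's projective metric on $\mathbb{R}^n_{>0}$ is $d_H(x,y)=\log\max_{i,j\in[n]}\frac{y_ix_j}{x_iy_j}$. $E(f)=\{x\in\mathbb{R}^n_{>0}: f(x)=\mu x\text{ for some }\mu\}$ is the set of entrywise positive eigenvectors of $f$. Every order-preserving homogeneous $f:\mathbb{R}^n_{>0}\to\mathbb{R}^n_{>0}$ extends continuously (and uniquely) to order-preserving homogeneous maps $\mathbb{R}^n_{\ge0}\to\mathbb{R}^n_{\ge0}$ and $(0,\infty]^n\to(0,\infty]^n$ (order topology on the extended reals, conventions $c<\infty$, $c\cdot\infty=\infty$ for $c>0$); these extensions are also denoted $f$. For $\alpha\in[-\infty,\infty]$ and $J\subseteq[n]$, $P^J_\alpha$ is the map with $P^J_\alpha(x)_j=x_j$ if $j\in J$ and $P^J_\alpha(x)_j=\alpha$ otherwise. Define $f^J_0=P^J_0\circ f\circ P^J_0:\mathbb{R}^n_{\ge0}\to\mathbb{R}^n_{\ge0}$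 and $f^J_\infty=P^J_\infty\circ f\circ P^J_\infty:(0,\infty]^n\to(0,\infty]^n$. For an order-preserving homogeneous map $g$ on $\mathbb{R}^n_{\ge0}$ or on $(0,\infty]^n$, the upper and lower Collatz–Wielandt numbers are $r(g)=\inf_{x\in\mathbb{R}^n_{>0}}\max_{i\in[n]}g(x)_i/x_i$ and $\lambda(g)=\sup_{x\in\mathbb{R}^n_{>0}}\min_{i\in[n]}g(x)_i/x_i$, with values in $[0,\infty]$ (a ratio with infinite numerator is $\infty$). *)

(* Defs.v *)
(* R : realType, vectors in R^n are functions 'I_n -> R,
   vectors in (0,oo]^n are functions 'I_n -> \bar R. *)
From HB Require Import structures.
From mathcomp Require Import all_boot all_order all_algebra.
From mathcomp Require Import all_classical all_reals.
From mathcomp Require Import ereal exp.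
Set Implicit Arguments. Unset Strict Implicit. Unset Printing Implicit Defensive.
Import Order.TTheory GRing.Theory Num.Theory.
Local Open Scope classical_set_scope.
Local Open Scope ring_scope.

Section Defs.
Variables (R : realType) (n : nat).
Notation vec := ('I_n -> R).
Notation evec := ('I_n -> \bar R).

Definition posvec (x : vec) : Prop := forall i, 0 < x i.
Definition vle (x y : vec) : Prop := forall i, x i <= y i.

(* f maps R^n_{>0} into R^n_{>0} (f is only relevant on R^n_{>0}) *)
Definition maps_pos (f : vec -> vec) : Prop :=
  forall x, posvec x -> posvec (f x).
Definition order_preserving_map (f : vec -> vec) : Prop :=
  forall x y, posvec x -> posvec y -> vle x y -> vle (f x) (f y).
Definition homogeneous_map (f : vec -> vec) : Prop :=
  forall (t : R) x, 0 < t -> posvec x -> f (fun i => t * x i) = (fun i => t * f x i).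

Definition hilbert_dist (x y : vec) : R :=
  ln (\big[Num.max/1]_(i < n) \big[Num.max/1]_(j < n) (y i * x j / (x i * y j))).

Definition pos_eigenvectors (f : vec -> vec) : set vec :=
  [set x | posvec x /\ exists mu : R, f x = (fun i => mu * x i)].

Definition nonempty_bounded_hilbert (A : set vec) : Prop :=
  (exists x, A x) /\ (exists M : R, forall x y, A x -> A y -> hilbert_dist x y <= M).

(* continuous extension of f to R^n_{>=0}: f(x) = lim_{eps->0+} f(x + eps 1)
   (a decreasing limit, i.e. an infimum) *)
Definition ext0 (f : vec -> vec) (x : vec) : vec :=
  fun i => inf [set f (fun k => x k + e) i | e in [set e : R | 0 < e]].

(* continuous extension of f to (0,oo]^n: f(x) = lim_{t->oo} f(min(x, t 1))
   (an increasing limit, i.e. a supremum in \bar R) *)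
Definition trunc (x : evec) (t : R) : vec :=
  fun k => fine (Order.min (x k) t%:E).
Definition extinf (f : vec -> vec) (x : evec) : evec :=
  fun i => ereal_sup [set (f (trunc x t) i)%:E | t in [set t : R | 0 < t]].

Definition P0 (J : {set 'I_n}) (x : vec) : vec :=
  fun j => if j \in J then x j else 0.
Definition Pinf (J : {set 'I_n}) (x : evec) : evec :=
  fun j => if j \in J then x j else +oo%E.

Definition f0J (f : vec -> vec) (J : {set 'I_n}) : vec -> vec :=
  fun x => P0 J (ext0 f (P0 J x)).
Definition finfJ (f : vec -> vec) (J : {set 'I_n}) : evec -> evec :=
  fun x => Pinf J (extinf f (Pinf J x)).

Definition cw_upper (g : vec -> vec) : \bar R :=
  ereal_inf [set (\big[Num.max/0]_(i < n) (g x i / x i))%:E | x in posvec].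

(* lower Collatz-Wielandt number of a map on (0,oo]^n; an infinite
   numerator gives the ratio +oo *)
Definition cw_lower (g : evec -> evec) : \bar R :=
  ereal_sup [set (\big[Order.min/+oo%E]_(i < n)
                    (g (fun k => (x k)%:E) i * ((x i)^-1)%:E))%E | x in posvec].

End Defs.

(* Main.v *)
Require Import Defs.
From HB Require Import structures.
From mathcomp Require Import all_boot all_order all_algebra.
From mathcomp Require Import all_classical all_reals.
From mathcomp Require Import ereal exp.
From mathcomp.algebra_tactics Require Import ring lra.
From mathcomp Require Import zify.
Import Order.TTheory GRing.Theory Num.Theory.
Local Open Scope classical_set_scope.
Local Open Scope ring_scope.
Set Implicit Arguments. Unset Strict Implicit. Unset Printing Implicit Defensive.


Section Basics.
Variables (R : realType) (n : nat).
Notation vec := ('I_n -> R).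

Definition box (a b x : vec) := forall i, a i <= x i /\ x i <= b i.
Definition vsup (S : set vec) : vec := fun i => sup [set x i | x in S].
Definition vinf (S : set vec) : vec := fun i => inf [set x i | x in S].

Lemma vsup_ub (S : set vec) (b : vec) x :
  (forall y, S y -> vle y b) -> S x -> vle x (vsup S).
Proof.
move=> Sb Sx i; apply: ub_le_sup; last by exists x.
by exists (b i) => _ [y Sy <-]; exact: Sb.
Qed.

Lemma vsup_le (S : set vec) (c : vec) :
  S !=set0 -> (forall y, S y -> vle y c) -> vle (vsup S) c.
Proof.
move=> [x Sx] Sc i; apply: ge_sup; first by exists (x i), x.
by move=> _ [y Sy <-]; exact: Sc.
Qed.

Lemma vinf_lb (S : set vec) (b : vec) x :
  (forall y, S y -> vle b y) -> S x -> vle (vinf S) x.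
Proof.
move=> Sb Sx i; apply: ge_inf; last by exists x.
by exists (b i) => _ [y Sy <-]; exact: Sb.
Qed.

Lemma vinf_ge (S : set vec) (c : vec) :
  S !=set0 -> (forall y, S y -> vle c y) -> vle c (vinf S).
Proof.
move=> [x Sx] Sc i; apply: lb_le_inf; first by exists (x i), x.
by move=> _ [y Sy <-]; exact: Sc.
Qed.

Lemma vle_anti (x y : vec) : vle x y -> vle y x -> x = y.
Proof. by move=> h1 h2; apply: funext => i; apply: le_anti; rewrite h1 h2. Qed.

Lemma vle_trans (x y z : vec) : vle x y -> vle y z -> vle x z.
Proof. by move=> h1 h2 i; exact: le_trans (h1 i) (h2 i). Qed.

Lemma tarski (h : vec -> vec) (a b : vec) :
  vle a b ->
  (forall x y, box a b x -> box a b y -> vle x y -> vle (h x) (h y)) ->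
  (forall x, box a b x -> box a b (h x)) ->
  exists x, box a b x /\ h x = x.
Proof.
move=> ab hmon hbox.
pose S := [set x | box a b x /\ vle x (h x)].
have aS : S a.
  have ba : box a b a by move=> i; rewrite lexx ab.
  by split => // i; have [] := hbox a ba i.
have Sb : forall y, S y -> vle y b by move=> y [hy _] i; case: (hy i).
have S0 : S !=set0 by exists a.
set X := vsup S.
have xX : forall x, S x -> vle x X by move=> x; exact: vsup_ub Sb.
have bX : box a b X.
  move=> i; split; first exact: (xX a aS i).
  exact: (vsup_le S0 Sb i).
have XhX : vle X (h X).
  apply: vsup_le => // y Sy; apply: vle_trans (proj2 Sy) _.
  by apply: hmon => //; [exact: proj1 Sy | exact: xX].
have hXS : S (h X) by split; [exact: hbox | apply: hmon => //; exact: hbox].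
exists X; split => //; apply: vle_anti => //; exact: xX.
Qed.

End Basics.


Section B.
Variables (R : realType) (n : nat).
Notation vec := ('I_n -> R).

Definition goodf (f : vec -> vec) :=
  [/\ maps_pos f, order_preserving_map f & homogeneous_map f].

Definition scal (t : R) (x : vec) : vec := fun i => t * x i.
Definition cst (c : R) : vec := fun _ => c.

Lemma posvec_scal t x : 0 < t -> posvec x -> posvec (scal t x).
Proof. by move=> t0 px i; rewrite /scal mulr_gt0. Qed.

Lemma posvec_cst c : 0 < c -> posvec (cst c).
Proof. by move=> c0 i. Qed.

Lemma homog_scal f t x : goodf f -> 0 < t -> posvec x -> f (scal t x) = scal t (f x).
Proof. by case=> _ _ hf t0 px; exact: hf. Qed.

Lemma op_scal f x y t : goodf f -> 0 < t -> posvec x -> posvec y ->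
  vle x (scal t y) -> vle (f x) (scal t (f y)).
Proof.
move=> gf t0 px py xy; rewrite -homog_scal //.
by case: gf => _ op _; apply: op => //; exact: posvec_scal.
Qed.

Lemma op_scal' f x y t : goodf f -> 0 < t -> posvec x -> posvec y ->
  vle (scal t y) x -> vle (scal t (f y)) (f x).
Proof.
move=> gf t0 px py xy; rewrite -homog_scal //.
by case: gf => _ op _; apply: op => //; exact: posvec_scal.
Qed.

Lemma exists_argmax (P : pred 'I_n) (F : 'I_n -> R) i0 :
  P i0 -> exists i, P i /\ forall j, P j -> F j <= F i.
Proof.
move=> Pi0; case: (arg_maxP F Pi0) => i Pi Hi; exists i; split => //.
Qed.

Lemma exists_argmin (P : pred 'I_n) (F : 'I_n -> R) i0 :
  P i0 -> exists i, P i /\ forall j, P j -> F i <= F j.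
Proof.
move=> Pi0; case: (arg_minP F Pi0) => i Pi Hi; exists i; split => //.
Qed.

Lemma cw_cmp f x y mu nu (i0 : 'I_n) : goodf f -> posvec x -> posvec y ->
  (forall i, mu * x i <= f x i) -> (forall i, f y i <= nu * y i) -> mu <= nu.
Proof.
move=> gf px py hx hy.
have [i [_ Hi]] := @exists_argmax xpredT (fun i => x i / y i) i0 isT.
set t := x i / y i.
have t0 : 0 < t by rewrite divr_gt0.
have xy : vle x (scal t y).
  move=> j; rewrite /scal -ler_pdivrMr //; exact: Hi.
have := op_scal gf t0 px py xy i; rewrite /scal => h.
have xi : x i = t * y i by rewrite /t divfK // gt_eqF.
have : mu * x i <= nu * x i.
  apply: le_trans (hx i) _; apply: le_trans h _.
  by rewrite xi mulrCA ler_wpM2l // ltW.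
by rewrite ler_pM2r.
Qed.

Lemma spread_bound (y : vec) : posvec y -> exists S, forall i k, y i <= S * y k.
Proof.
move=> py; exists (\big[Num.max/1]_i \big[Num.max/1]_k (y i / y k)) => i k.
rewrite -ler_pdivrMr //.
apply: le_trans (le_bigmax _ _ i); exact: (le_bigmax _ (fun k => y i / y k) k).
Qed.

End B.


Section C.
Variables (R : realType) (n : nat).
Notation vec := ('I_n -> R).

Definition Cp (f : vec -> vec) := forall K : {set 'I_n}, K != finset.set0 -> K != finset.setT ->
  exists c y z, [/\ posvec y, posvec z, (forall i, i \in K -> f y i < c * y i)
                  & (forall i, i \notin K -> c * z i < f z i)].

Definition gapset (S : R) (K : {set 'I_n}) (x : vec) :=
  forall j k, j \in K -> k \notin K -> S * x k <= x j.

Lemma notT_ex (K : {set 'I_n}) : K != finset.setT -> exists k, k \notin K.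
Proof.
move=> KT; apply/existsP; apply: contraNT KT; rewrite negb_exists => /forallP h.
by apply/eqP/setP => i; rewrite inE; move: (h i); rewrite negbK.
Qed.

Lemma not0_ex (K : {set 'I_n}) : K != finset.set0 -> exists k, k \in K.
Proof. by case/set0Pn => k kK; exists k. Qed.

Lemma gap_one f (K : {set 'I_n}) c y z S : goodf f -> posvec y -> posvec z ->
  (forall i k, y i <= S * y k) -> (forall i k, z i <= S * z k) ->
  (forall i, i \in K -> f y i < c * y i) -> (forall i, i \notin K -> c * z i < f z i) ->
  K != finset.set0 -> K != finset.setT ->
  forall mu x, posvec x -> gapset S K x ->
  (forall j, j \in K -> mu * x j <= f x j) -> (forall k, k \notin K -> f x k <= mu * x k) ->
  False.
Proof.
move=> gf py pz hyS hzS hy hz K0 K1 mu x px hgap hhi hlo.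
have [j0 j0K] := not0_ex K0; have [k0 k0K] := notT_ex K1.
have [i0 [i0K Hi0]] := @exists_argmax _ _ (fun j => j \in K) (fun j => x j / y j) j0 j0K.
set t := x i0 / y i0.
have t0 : 0 < t by rewrite divr_gt0.
have xt : vle x (scal t y).
  move=> j; rewrite /scal; case: (boolP (j \in K)) => jK.
    by rewrite -ler_pdivrMr //; exact: Hi0.
  have h1 := hgap i0 j i0K jK; have h2 := hyS i0 j.
  have := px j; have := py j; have := px i0; have := py i0.
  rewrite /t => *; rewrite mulrAC ler_pdivlMr //; nra.
have h1 := op_scal gf t0 px py xt i0; rewrite /scal in h1.
have h2 := hy i0 i0K.
have ti : t * y i0 = x i0 by rewrite /t divfK // gt_eqF.
have muc : mu < c.
  have : mu * x i0 < c * x i0.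
    apply: le_lt_trans (hhi i0 i0K) _; apply: le_lt_trans h1 _.
    by rewrite -ti mulrCA ltr_pM2l.
  by rewrite ltr_pM2r.
have [k1 [k1K Hk1]] := @exists_argmin _ _ (fun j => j \notin K) (fun j => x j / z j) k0 k0K.
set s := x k1 / z k1.
have s0 : 0 < s by rewrite divr_gt0.
have xs : vle (scal s z) x.
  move=> j; rewrite /scal; case: (boolP (j \in K)) => jK.
    have h3 := hgap j k1 jK k1K; have h4 := hzS j k1.
    have := px j; have := pz j; have := px k1; have := pz k1.
    rewrite /s => *; rewrite mulrAC ler_pdivrMr //; nra.
  by rewrite -ler_pdivlMr //; exact: Hk1.
have h3 := op_scal' gf s0 px pz xs k1; rewrite /scal in h3.
have h4 := hz k1 k1K.
have sk : s * z k1 = x k1 by rewrite /s divfK // gt_eqF.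
have : c * x k1 < mu * x k1.
  apply: lt_le_trans _ (hlo k1 k1K); apply: lt_le_trans _ h3.
  by rewrite -sk mulrCA ltr_pM2l.
rewrite ltr_pM2r // => cmu.
by have := lt_trans muc cmu; rewrite ltxx.
Qed.

Lemma gapK f : goodf f -> Cp f -> exists S, 1 <= S /\
  forall K, K != finset.set0 -> K != finset.setT -> forall mu x, posvec x -> gapset S K x ->
  (forall j, j \in K -> mu * x j <= f x j) -> (forall k, k \notin K -> f x k <= mu * x k) ->
  False.
Proof.
move=> gf cp.
pose P (K : {set 'I_n}) S := 1 <= S /\ (K != finset.set0 -> K != finset.setT -> forall mu x, posvec x ->
  gapset S K x ->
  (forall j, j \in K -> mu * x j <= f x j) -> (forall k, k \notin K -> f x k <= mu * x k) ->
  False).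
have hP : forall K, exists S, P K S.
  move=> K; case: (boolP (K != finset.set0)) => K0; last by exists 1; split => // h; rewrite h in K0.
  case: (boolP (K != finset.setT)) => K1; last by exists 1; split => // _ h; rewrite h in K1.
  have [c [y [z [py pz hy hz]]]] := cp K K0 K1.
  have [Sy hSy] := spread_bound py; have [Sz hSz] := spread_bound pz.
  exists (Num.max 1 (Num.max Sy Sz)); split; first by rewrite le_max lexx.
  move=> _ _; apply: (gap_one gf py pz _ _ hy hz K0 K1).
    move=> i k; apply: le_trans (hSy i k) _; rewrite ler_wpM2r ?(ltW (py k)) //.
    by rewrite !le_max lexx orbT.
  move=> i k; apply: le_trans (hSz i k) _; rewrite ler_wpM2r ?(ltW (pz k)) //.
  by rewrite !le_max lexx !orbT.
have [kap hkap] := choice hP.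
exists (\big[Num.max/1]_(K : {set 'I_n}) kap K); split; first by apply/bigmax_geP; left.
move=> K K0 K1 mu x px hg; have [_ hk] := hkap K; apply: (hk K0 K1 mu x px).
move=> j k jK kK; apply: le_trans (hg j k jK kK).
by rewrite ler_wpM2r ?(ltW (px k)) //; exact: (le_bigmax _ kap K).
Qed.


Lemma pigeon (x : vec) (S : R) : 1 < S -> posvec x ->
  (forall K, K != finset.set0 -> K != finset.setT -> ~ gapset S K x) ->
  forall i k, x i < S ^+ n * x k.
Proof.
move=> S1 px hK i k.
have [k0 [_ Hk0]] := @exists_argmin _ _ xpredT x i isT.
set m := x k0.
have m0 : 0 < m := px k0.
have n0 : (0 < n)%N := leq_ltn_trans (leq0n i) (ltn_ord i).
have S0 : 0 < S := lt_trans ltr01 S1.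
have Sp : forall p, 0 < S ^+ p by move=> p; exact: exprn_gt0.
pose L (p : nat) := [set j : 'I_n | x j < m * S ^+ p]%SET.
have Lmon : forall p, L p \subset L p.+1.
  move=> p; apply/fintype.subsetP => j; rewrite !inE => h; apply: lt_le_trans h _.
  by rewrite exprS; have := mulr_gt0 m0 (Sp p); nra.
have claim : forall p, (minn p n <= #|L p|)%N.
  elim=> [|p IH]; first by rewrite min0n.
  case: (altP (L p =P finset.setT)) => LT.
    apply: leq_trans (geq_minr _ _) _.
    by have := subset_leq_card (Lmon p); rewrite LT cardsT card_ord.
  case: (altP (L p =P finset.set0)) => L0.
    move: IH; rewrite L0 cards0 leqn0 => /eqP; case: p {LT L0} => [|p].
      move=> _; rewrite (minn_idPl n0) card_gt0; apply/set0Pn; exists k0.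
      by rewrite inE expr1 mulrC ltr_pMl.
    by move=> h; exfalso; move: h n0; case: (n) => // n1; rewrite minnSS.
  have K0 : ~: L p != finset.set0.
    apply: contra LT => /eqP h; apply/eqP/setP => j; rewrite [in RHS]inE.
    apply/negbNE; apply/negP => hj.
    have hc : j \in ~: L p by rewrite inE hj.
    by rewrite h inE in hc.
  have K1 : ~: L p != finset.setT.
    have [j jL] := not0_ex L0.
    apply/negP => /eqP h; have : j \in ~: L p by rewrite h inE.
    by rewrite inE jL.
  have [j [k' [jK kK lt]]] : exists j k', [/\ j \in ~: L p, k' \notin ~: L p & x j < S * x k'].
    apply: contrapT => H; apply: (hK _ K0 K1) => j k' jK kK.
    rewrite leNgt; apply/negP => lt; apply: H; by exists j, k'; split.
  have jn : j \notin L p by move: jK; rewrite inE.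
  have kin : k' \in L p by move: kK; rewrite inE negbK.
  have jin : j \in L p.+1.
    rewrite inE; apply: lt_le_trans lt _; move: kin; rewrite inE => h.
    rewrite exprS mulrCA ler_pM2l ?(lt_trans ltr01) //; exact: ltW.
  have pr : L p \proper L p.+1 by apply/properP; split => //; exists j.
  have pc := proper_card pr.
  apply: (@leq_trans (minn p n).+1).
    by rewrite -minnSS leq_min geq_minl /= (leq_trans (geq_minr _ _) (leqnSn _)).
  by apply: leq_trans pc; rewrite ltnS.
have : L n = finset.setT.
  apply/eqP; rewrite eqEcard finset.subsetT cardsT card_ord.
  by have := claim n; rewrite minnn.
move/setP/(_ i); rewrite !inE => /idP hi.
apply: lt_le_trans hi _; rewrite [m * _]mulrC ler_wpM2l //; last exact: (Hk0 k).
exact: exprn_ge0 (ltW S0).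
Qed.

End C.


Section D.
Variables (R : realType) (n : nat).
Notation vec := ('I_n -> R).

Definition clamp (d g : R) := Num.min (Num.max g d) 1.

Lemma clamp_mono d a b : a <= b -> clamp d a <= clamp d b.
Proof.
by move=> ab; apply: le_min2 => //; apply: le_max2.
Qed.

Lemma clamp_box d g : d <= 1 -> d <= clamp d g /\ clamp d g <= 1.
Proof.
move=> d1; rewrite /clamp le_min ge_min lexx orbT le_max lexx orbT d1; split=> //.
Qed.

Lemma clamp_lt1 d g : d <= 1 -> clamp d g < 1 -> g <= clamp d g.
Proof.
rewrite /clamp => d1; case: (leP (Num.max g d) 1) => h.
  by move=> _; rewrite le_max lexx.
by rewrite ltxx.
Qed.

Lemma clamp_gtd d g : d <= 1 -> d < clamp d g -> clamp d g <= g.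
Proof.
rewrite /clamp => d1; case: (leP g d) => gd.
  by rewrite (min_idPl d1) ltxx.
by move=> _; rewrite ge_min lexx.
Qed.


Lemma box_pos (d : R) (x : vec) : 0 < d -> box (cst d) (cst 1) x -> posvec x.
Proof. by move=> d0 bx i; have [h _] := bx i; exact: lt_le_trans h. Qed.

Lemma R1 (f : vec -> vec) (i0 : 'I_n) : goodf f -> Cp f -> exists d, [/\ 0 < d, d < 1 &
  forall mu, 0 < mu -> exists x, box (cst d) (cst 1) x /\
    ((forall i, f x i <= mu * x i) \/ (forall i, mu * x i <= f x i))].
Proof.
move=> gf cp; have [S [S1 hS]] := gapK gf cp.
set K := S + 1.
have K1 : 1 < K by rewrite /K; lra.
have K0 : 0 < K by rewrite /K; lra.
have n0 : n != 0%N by case: i0 => i; case: n.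
have Kn : 1 < K ^+ n by rewrite exprn_egt1.
set d := (K ^+ n)^-1.
have d0 : 0 < d by rewrite invr_gt0 (lt_trans ltr01).
have d1 : d < 1 by rewrite invf_lt1 // (lt_trans ltr01).
exists d; split => // mu mu0.
pose h (x : vec) : vec := fun i => clamp d (f x i / mu).
have [x [bx hx]] : exists x, box (cst d) (cst 1) x /\ h x = x.
  apply: tarski.
  - by move=> i; exact: ltW.
  - move=> x y bx by' xy i; apply: clamp_mono; rewrite ler_pM2r ?invr_gt0 //.
    by case: gf => _ op _; apply: op => //; [exact: box_pos bx | exact: box_pos by'].
  - by move=> x _ i; exact: clamp_box (ltW d1).
have px := box_pos d0 bx.
have xe : forall i, x i = clamp d (f x i / mu) by move=> i; rewrite -{1}hx.
have lo : forall i, x i < 1 -> f x i <= mu * x i.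
  move=> i xi; rewrite -ler_pdivrMl // mulrC; rewrite xe; apply: clamp_lt1 (ltW d1) _.
  by rewrite -xe.
have hi : forall i, d < x i -> mu * x i <= f x i.
  move=> i xi; rewrite -ler_pdivlMl // mulrC; rewrite xe; apply: clamp_gtd (ltW d1) _.
  by rewrite -xe.
exists x; split => //.
case: (pselect (forall i, f x i <= mu * x i)) => [H|/existsNP [i1 /negP]]; first by left.
rewrite -ltNge => h1.
case: (pselect (forall i, mu * x i <= f x i)) => [H|/existsNP [k1 /negP]]; first by right.
rewrite -ltNge => h2.
exfalso.
have xi1 : x i1 = 1.
  apply/eqP; rewrite eq_le (proj2 (bx i1)) /=; rewrite leNgt; apply/negP => h3.
  by have := lo i1 h3; rewrite leNgt h1.
have xk1 : x k1 = d.
  apply/eqP; rewrite eq_le (proj1 (bx k1)) andbT; rewrite leNgt; apply/negP => h3.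
  by have := hi k1 h3; rewrite leNgt h2.
have [K' [K'0 K'1 hg]] : exists K', [/\ K' != finset.set0, K' != finset.setT & gapset K K' x].
  apply: contrapT => H.
  have H2 : forall K'', K'' != finset.set0 -> K'' != finset.setT -> ~ gapset K K'' x.
    by move=> K'' h0 h1' hg; apply: H; exists K''.
  have := pigeon K1 px H2 i1 k1; rewrite xi1 xk1 /d mulfV ?ltxx // gt_eqF //.
  exact: lt_trans ltr01 Kn.
apply: (hS K' K'0 K'1 mu x px).
- move=> j k jK kK; apply: le_trans (hg j k jK kK).
  by rewrite ler_wpM2r ?(ltW (px k)) // /K; lra.
- move=> j jK; apply: hi; have [k kK] := notT_ex K'1.
  have := hg j k jK kK; have := proj1 (bx k); rewrite /cst => h4 h5.
  apply: lt_le_trans h5; apply: lt_le_trans (_ : K * d <= K * x k); last first.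
    by rewrite ler_pM2l.
  by rewrite ltr_pMl.
- move=> k kK; apply: lo; have [j jK] := not0_ex K'0.
  have := hg j k jK kK; have := proj2 (bx j); rewrite /cst => h4 h5.
  have := px k; nra.
Qed.


Lemma limsup (f : vec -> vec) (d mu0 : R) : goodf f -> 0 < d -> d <= 1 -> 0 < mu0 ->
  (forall mu, mu0 < mu -> exists x, box (cst d) (cst 1) x /\ forall i, f x i <= mu * x i) ->
  exists x, box (cst d) (cst 1) x /\ forall i, f x i <= mu0 * x i.
Proof.
move=> gf d0 d1 mu00 hyp.
have op : order_preserving_map f by case: gf.
pose T mu := [set x : vec | box (cst d) (cst 1) x /\ forall i, f x i <= mu * x i].
pose m mu := vinf (T mu).
have Tlb : forall mu y, T mu y -> vle (cst d) y by move=> mu y [by' _] i; case: (by' i).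
have Tne : forall mu, mu0 < mu -> T mu !=set0 by move=> mu /hyp [x hx]; exists x.
have mT : forall mu, mu0 < mu -> T mu (m mu).
  move=> mu mu1; have [x Tx] := Tne _ mu1.
  have dm : vle (cst d) (m mu) by apply: vinf_ge; [exists x | exact: (@Tlb mu)].
  have pm : posvec (m mu) by move=> i; exact: lt_le_trans d0 (dm i).
  have mu0' : 0 < mu by exact: lt_trans mu00 mu1.
  split.
    move=> i; split; first exact: dm.
    by apply: le_trans (vinf_lb (@Tlb mu) Tx i) _; case: Tx => bx _; case: (bx i).
  move=> i; rewrite -ler_pdivrMl //.
  have : vle (fun j => mu^-1 * f (m mu) j) (m mu).
    apply: vinf_ge; first by exists x.
    move=> y Ty j; rewrite ler_pdivrMl //.
    apply: le_trans (proj2 Ty j); apply: op => //.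
      by move=> k; exact: lt_le_trans d0 (Tlb _ _ Ty k).
    exact: vinf_lb (@Tlb mu) Ty.
  by move=> /(_ i); rewrite mulrC.
have manti : forall mu mu', mu0 < mu -> mu <= mu' -> vle (m mu') (m mu).
  move=> mu mu' mu1 mm; apply: vinf_ge; first exact: Tne.
  move=> y [by' hy]; apply: vinf_lb (@Tlb mu') _; split => // i.
  apply: le_trans (hy i) _; rewrite ler_wpM2r //; exact: ltW (lt_le_trans d0 (proj1 (by' i))).
pose Ms := [set y : vec | exists2 mu, mu0 < mu & y = m mu].
have Msb : forall y, Ms y -> vle y (cst 1).
  by move=> y [mu mu1 ->] i; have [bx _] := mT mu mu1; case: (bx i).
have Msne : Ms !=set0 by exists (m (mu0 + 1)); exists (mu0 + 1) => //; lra.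
set M := vsup Ms.
have mM : forall mu, mu0 < mu -> vle (m mu) M.
  by move=> mu mu1; apply: vsup_ub Msb _; exists mu.
have bM : box (cst d) (cst 1) M.
  move=> i; split; last exact: vsup_le Msne Msb i.
  have mu1 : mu0 < mu0 + 1 by lra.
  have [bx _] := mT _ mu1; apply: le_trans (mM _ mu1 i); exact: proj1 (bx i).
have pM : posvec M := box_pos d0 bM.
exists M; split => // i.
apply/ler_addgt0Pr => e e0.
have Mi1 : M i <= 1 := proj2 (bM i).
suff : f M i <= (mu0 + e) * M i.
  move=> h; apply: le_trans h _; rewrite mulrDl lerD2l.
  by rewrite -[X in _ <= X]mulr1 ler_wpM2l // ltW.
set nu := mu0 + e / 2.
have nu0 : mu0 < nu by rewrite /nu; lra.
set eta := (mu0 + e) / nu.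
have nupos : 0 < nu by rewrite /nu; lra.
have eta1 : 1 < eta by rewrite /eta ltr_pdivlMr // mul1r /nu; lra.
have eta0 : 0 < eta := lt_trans ltr01 eta1.
have hk : forall k, exists mu, mu0 < mu /\ mu <= nu /\ M k <= eta * m mu k.
  move=> k.
  have hs : has_sup [set y k | y in Ms].
    split; first by have [y Hy] := Msne; exists (y k), y.
    by exists 1 => _ [y Hy <-]; exact: Msb.
  have ep : 0 < M k - M k / eta.
    rewrite subr_gt0 ltr_pdivrMr // ltr_pMr //; exact: pM.
  have [_ [y [mu mu1 ->] <-] hlt] := sup_adherent ep hs.
  exists (Num.min mu nu); split; first by rewrite lt_min mu1 nu0.
  split; first by rewrite ge_min lexx orbT.
  have hlt' : M k / eta < m mu k.
    suff -> : M k / eta = sup [set y k | y in Ms] - (M k - M k / eta) by [].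
    by rewrite /M /vsup; ring.
  have h5 := manti _ _ (_ : mu0 < Num.min mu nu) (_ : Num.min mu nu <= mu) k.
  rewrite -[M k](divfK (negbT (gt_eqF eta0))) [_ * eta]mulrC ler_pM2l //.
  apply: le_trans (ltW hlt') (h5 _ _); first by rewrite lt_min mu1 nu0.
  by rewrite ge_min lexx.
have [kap hkap] := choice hk.
set mh := \big[Num.min/nu]_k kap k.
have mh0 : mu0 < mh.
  by apply: lt_bigmin => // k _; case: (hkap k).
have mhk : forall k, mh <= kap k by move=> k; exact: bigmin_le.
have mhnu : mh <= nu by apply/bigmin_leP; left.
have [bmh fmh] := mT mh mh0.
have pmh : posvec (m mh) := box_pos d0 bmh.
have Mle : vle M (scal eta (m mh)).
  move=> k; case: (hkap k) => _ [_ h]; apply: le_trans h _; rewrite /scal ler_wpM2l ?(ltW eta0) //.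
  exact: manti _ _ mh0 (mhk k) k.
have := op_scal gf eta0 pM pmh Mle i; rewrite /scal => h1.
apply: le_trans h1 _.
have h2 := fmh i.
have h3 := mM mh mh0 i.
have en : eta * nu = mu0 + e by rewrite /eta divfK ?gt_eqF.
apply: le_trans (_ : eta * (nu * M i) <= _); last by rewrite mulrA en.
rewrite ler_pM2l //; apply: le_trans h2 _; apply: le_trans (_ : nu * m mh i <= _).
  by rewrite ler_pM2r.
by rewrite ler_pM2l.
Qed.


Definition vinv (x : vec) : vec := fun i => (x i)^-1.
Definition dual (f : vec -> vec) : vec -> vec := fun x => vinv (f (vinv x)).

Lemma posvec_inv x : posvec x -> posvec (vinv x).
Proof. by move=> px i; rewrite /vinv invr_gt0. Qed.

Lemma vinvK x : vinv (vinv x) = x.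
Proof. by apply: funext => i; rewrite /vinv invrK. Qed.

Lemma goodf_dual f : goodf f -> goodf (dual f).
Proof.
case=> mp op hg; split.
- by move=> x px; apply: posvec_inv; apply: mp; exact: posvec_inv.
- move=> x y px py xy i; rewrite /dual /vinv lef_pV2 ?posrE; last 2 first.
  + exact: mp (posvec_inv px) i.
  + exact: mp (posvec_inv py) i.
  apply: op; try exact: posvec_inv.
  by move=> k; rewrite /vinv lef_pV2 ?posrE.
- move=> t x t0 px; rewrite /dual.
  have -> : vinv (fun i => t * x i) = (fun i => t^-1 * vinv x i).
    by apply: funext => i; rewrite /vinv invfM mulrC.
  rewrite hg ?invr_gt0 //; last exact: posvec_inv.
  by apply: funext => i; rewrite /vinv invfM invrK mulrC.
Qed.

Lemma limsub (f : vec -> vec) (d mu0 : R) : goodf f -> 0 < d -> d <= 1 -> 0 < mu0 ->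
  (forall mu, 0 < mu -> mu < mu0 -> exists x, box (cst d) (cst 1) x /\ forall i, mu * x i <= f x i) ->
  exists x, posvec x /\ forall i, mu0 * x i <= f x i.
Proof.
move=> gf d0 d1 mu00 hyp.
have [mp op hg] := gf.
have [y [by' hy]] : exists y, box (cst d) (cst 1) y /\ forall i, dual f y i <= mu0^-1 * y i.
  apply: limsup; rewrite ?invr_gt0 //; first exact: goodf_dual.
  move=> mu' mu1.
  have mu'0 : 0 < mu' by apply: lt_trans mu1; rewrite invr_gt0.
  have m1 : 0 < mu'^-1 by rewrite invr_gt0.
  have m2 : mu'^-1 < mu0 by rewrite -(invrK mu0) ltf_pV2 ?posrE ?invr_gt0.
  have [x [bx hx]] := hyp _ m1 m2.
  have px := box_pos d0 bx.
  exists (fun i => d / x i); split.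
    move=> i; have [h1 h2] := bx i; rewrite /cst in h1 h2 *; split.
      by rewrite ler_pdivlMr //; have := px i; nra.
    by rewrite ler_pdivrMr // mul1r.
  move=> i; rewrite /dual.
  have -> : vinv (fun i => d / x i) = (fun i => d^-1 * x i).
    by apply: funext => j; rewrite /vinv invfM invrK mulrC.
  rewrite hg ?invr_gt0 // /vinv invfM invrK.
  have fx0 : 0 < f x i := mp x px i.
  have xi0 := px i.
  have h3 : (f x i)^-1 <= (mu'^-1 * x i)^-1.
    by rewrite lef_pV2 ?posrE ?mulr_gt0 ?invr_gt0.
  rewrite invfM invrK in h3.
  have -> : mu' * (d / x i) = (mu' * (x i)^-1) * d by ring.
  by rewrite [d / _]mulrC ler_pM2r.
have py := box_pos d0 by'.
exists (vinv y); split; first exact: posvec_inv.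
move=> i; have h1 := hy i; rewrite /dual in h1.
have h0 : 0 < f (vinv y) i := mp _ (posvec_inv py) i.
have yi := py i.
have h2 : (mu0^-1 * y i)^-1 <= ((vinv (f (vinv y))) i)^-1.
  by rewrite lef_pV2 ?posrE ?mulr_gt0 ?invr_gt0.
by move: h2; rewrite /vinv invrK invfM invrK.
Qed.


Lemma existsE (f : vec -> vec) : goodf f -> Cp f -> exists x, posvec x /\ exists mu, f x = scal mu x.
Proof.
move=> gf cp; have [mp op hg] := gf.
case: (posnP n) => [n0|n0].
  exists (cst 1); split; first by move=> [i hi]; exfalso; move: hi; rewrite n0.
  by exists 0; apply: funext => -[i hi]; exfalso; move: hi; rewrite n0.
pose i0 := Ordinal n0.
have [d [d0 d1 hR]] := R1 i0 gf cp.
pose SubS mu := exists x, posvec x /\ forall i, mu * x i <= f x i.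
pose A := [set mu | 0 < mu /\ SubS mu].
have p1 : posvec (cst 1 : vec) by apply: posvec_cst.
have f1 := mp _ p1.
have [ia [_ Hia]] := @exists_argmin _ _ xpredT (f (cst 1)) i0 isT.
have [ib [_ Hib]] := @exists_argmax _ _ xpredT (f (cst 1)) i0 isT.
have Aa : A (f (cst 1) ia).
  split; first exact: f1.
  by exists (cst 1); split => // i; rewrite /cst mulr1; exact: Hia.
have Aub : forall mu, A mu -> mu <= f (cst 1) ib.
  move=> mu [_ [x [px hx]]]; apply: (cw_cmp i0 gf px p1 hx).
  by move=> i; rewrite /cst mulr1; exact: Hib.
have hsA : has_sup A by split; [exists (f (cst 1) ia) | exists (f (cst 1) ib)].
set ms := sup A.
have msA : forall mu, A mu -> mu <= ms by move=> mu Amu; exact: sup_upper_bound.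
have ms0 : 0 < ms := lt_le_trans (f1 ia) (msA _ Aa).
have Hsup : forall mu, ms < mu -> exists x, box (cst d) (cst 1) x /\ forall i, f x i <= mu * x i.
  move=> mu mu1; have mu0 : 0 < mu := lt_trans ms0 mu1.
  have [x [bx [h|h]]] := hR mu mu0; first by exists x.
  have : A mu by split => //; exists x; split => //; exact: box_pos d0 bx.
  by move=> /msA; rewrite leNgt mu1.
have Hsub : forall mu, 0 < mu -> mu < ms -> exists x, box (cst d) (cst 1) x /\ forall i, mu * x i <= f x i.
  move=> mu mu0 mu1.
  have e0 : 0 < ms - mu by rewrite subr_gt0.
  have [mu' [_ [x' [px' hx']]] hmu'] := sup_adherent e0 hsA.
  have mm : mu < mu' by move: hmu'; rewrite /ms opprB addrCA subrr addr0.
  have [x [bx [h|h]]] := hR mu mu0; last by exists x.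
  have := cw_cmp i0 gf px' (box_pos d0 bx) hx' h.
  by rewrite leNgt mm.
have [b [bb hb]] := limsup gf d0 (ltW d1) ms0 Hsup.
have [a [pa ha]] := limsub gf d0 (ltW d1) ms0 Hsub.
have pb := box_pos d0 bb.
set t := \big[Num.max/1]_i (a i / b i).
have t0 : 0 < t by apply: lt_le_trans ltr01 _; apply/bigmax_geP; left.
have ab : vle a (scal t b).
  by move=> i; rewrite /scal -ler_pdivrMr // (le_bigmax _ (fun i => a i / b i) i).
pose h (x : vec) : vec := scal (ms^-1) (f x).
have [v [bv hv]] : exists v, box a (scal t b) v /\ h v = v.
  have boxpos : forall x, box a (scal t b) x -> posvec x.
    by move=> x bx i; apply: lt_le_trans (pa i) (proj1 (bx i)).
  apply: tarski => //.
    move=> x y bx by' xy i; rewrite /h /scal ler_pM2l ?invr_gt0 //.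
    by apply: op => //; apply: boxpos.
  move=> x bx i; rewrite /h /scal; split.
    rewrite ler_pdivlMl //; apply: le_trans (ha i) _; apply: op => //; first exact: boxpos.
    by move=> k; case: (bx k).
  rewrite ler_pdivrMl //; apply: le_trans (_ : f (scal t b) i <= _).
    by apply: op => //; [exact: boxpos | exact: posvec_scal | move=> k; case: (bx k)].
  rewrite (homog_scal gf t0 pb) /scal mulrCA ler_pM2l //; exact: hb.
exists v; split; first by move=> i; apply: lt_le_trans (pa i) (proj1 (bv i)).
exists ms; apply: funext => i; rewrite /scal -[in RHS]hv /h /scal mulrA divff ?mul1r //.
exact: lt0r_neq0.
Qed.

End D.


Section E.
Variables (R : realType) (n : nat).
Notation vec := ('I_n -> R).

Definition nrm (u : vec) (c : R) (f : vec -> vec) : vec -> vec :=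
  fun x i => f (fun k => u k * x k) i / (c * u i).

Lemma goodf_nrm u c f : goodf f -> posvec u -> 0 < c -> goodf (nrm u c f).
Proof.
case=> mp op hg pu c0; split.
- move=> x px i; rewrite /nrm divr_gt0 ?mulr_gt0 //.
  by apply: mp => k; rewrite mulr_gt0.
- move=> x y px py xy i; rewrite /nrm ler_pM2r ?invr_gt0 ?mulr_gt0 //.
  apply: op; try by move=> k; rewrite mulr_gt0.
  by move=> k; rewrite ler_pM2l.
- move=> t x t0 px; apply: funext => i; rewrite /nrm.
  have -> : (fun k => u k * (t * x k)) = (fun k => t * (u k * x k)).
    by apply: funext => k; rewrite mulrCA.
  rewrite hg // ?mulrA //; by move=> k; rewrite mulr_gt0.
Qed.

Lemma Cp_nrm u c f : goodf f -> posvec u -> 0 < c -> Cp f -> Cp (nrm u c f).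
Proof.
move=> gf pu c0 cp K K0 K1; have [e [y [z [py pz hy hz]]]] := cp K K0 K1.
exists (e / c), (fun k => y k / u k), (fun k => z k / u k); split.
- by move=> k; rewrite divr_gt0.
- by move=> k; rewrite divr_gt0.
- move=> i iK; rewrite /nrm.
  have -> : (fun k => u k * (y k / u k)) = y.
    by apply: funext => k; rewrite mulrC divfK // gt_eqF.
  have ui := pu i.
  rewrite ltr_pdivrMr ?mulr_gt0 //; apply: lt_le_trans (hy i iK) _.
  by rewrite le_eqVlt; apply/orP; left; apply/eqP; field; rewrite ?gt_eqF.
- move=> i iK; rewrite /nrm.
  have -> : (fun k => u k * (z k / u k)) = z.
    by apply: funext => k; rewrite mulrC divfK // gt_eqF.
  have ui := pu i.
  rewrite ltr_pdivlMr ?mulr_gt0 //; apply: le_lt_trans _ (hz i iK).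
  by rewrite le_eqVlt; apply/orP; left; apply/eqP; field; rewrite ?gt_eqF.
Qed.

Lemma eig_nrm u c f x mu : posvec u -> 0 < c -> f x = scal mu x ->
  nrm u c f (fun k => x k / u k) = scal (mu / c) (fun k => x k / u k).
Proof.
move=> pu c0 hx; apply: funext => i; rewrite /nrm.
have -> : (fun k => u k * (x k / u k)) = x.
  by apply: funext => k; rewrite mulrC divfK // gt_eqF.
rewrite hx /scal; have ui := pu i; field; rewrite ?gt_eqF //.
Qed.


Lemma eig_pos (f : vec -> vec) x mu (i0 : 'I_n) : goodf f -> posvec x -> f x = scal mu x -> 0 < mu.
Proof.
case=> mp _ _ px hx; have := mp x px i0; rewrite hx /scal.
by rewrite pmulr_lgt0.
Qed.

Lemma bounded (f : vec -> vec) : goodf f -> Cp f ->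
  exists M, forall x y, pos_eigenvectors f x -> pos_eigenvectors f y -> hilbert_dist x y <= M.
Proof.
move=> gf cp.
case: (pselect (exists u, pos_eigenvectors f u)) => [[u [pu [mu hu]]]|H]; last first.
  by exists 0 => x y Ex; exfalso; apply: H; exists x.
set g := nrm u 1 f.
have gg : goodf g := goodf_nrm gf pu ltr01.
have cg : Cp g := Cp_nrm gf pu ltr01 cp.
have [S [S1 hS]] := gapK gg cg.
set K := S + 1.
have K1 : 1 < K by rewrite /K; lra.
have K0 : 0 < K by rewrite /K; lra.
have Kn : 0 < K ^+ n by exact: exprn_gt0.
have key : forall x, pos_eigenvectors f x -> forall i k,
    x i / u i < K ^+ n * (x k / u k).
  move=> x [px [nu hx]].
  have hx' : f x = scal nu x by [].
  have pp : posvec (fun k => x k / u k) by move=> k; rewrite divr_gt0.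
  have eg := eig_nrm pu ltr01 hx'; rewrite divr1 in eg.
  apply: (pigeon K1 pp) => K' K'0 K'1 hgap.
  apply: (hS K' K'0 K'1 nu _ pp).
  - move=> j k jK kK; apply: le_trans (hgap j k jK kK).
    by rewrite ler_wpM2r ?(ltW (pp k)) // /K; lra.
  - by move=> j _; rewrite /g eg.
  - by move=> k _; rewrite /g eg.
exists (ln (K ^+ n * K ^+ n)) => x y Ex Ey.
have [px _] := Ex; have [py _] := Ey.
rewrite /hilbert_dist ler_ln ?posrE ?mulr_gt0 //; last first.
  by apply: lt_le_trans ltr01 _; apply/bigmax_geP; left.
apply: bigmax_le => [|i _]; first by rewrite -[1]mulr1 ler_pM ?exprn_ege1 ?ltW.
apply: bigmax_le => [|j _]; first by rewrite -[1]mulr1 ler_pM ?exprn_ege1 ?ltW.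
have h1 := key y Ey i j; have h2 := key x Ex j i.
have ui := pu i; have uj := pu j.
have xi := px i; have xj := px j; have yi := py i; have yj := py j.
have -> : y i * x j / (x i * y j) = (y i / u i / (y j / u j)) * (x j / u j / (x i / u i)).
  by field; rewrite !gt_eqF.
apply: ler_pM; rewrite ?divr_ge0 ?ltW ?divr_gt0 //.
  by rewrite ltr_pdivrMr ?divr_gt0.
by rewrite ltr_pdivrMr ?divr_gt0.
Qed.

End E.


Section F.
Variables (R : realType) (n : nat).
Notation vec := ('I_n -> R).

Definition Mx (x : vec) : R := \big[Num.max/0]_k x k.

Lemma Mx_ge x k : x k <= Mx x.
Proof. exact: (le_bigmax _ x k). Qed.

Lemma Mx_le x c : 0 <= c -> (forall k, x k <= c) -> Mx x <= c.
Proof. by move=> c0 h; apply: bigmax_le => // k _; exact: h. Qed.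

Lemma Mx_mono x y : posvec x -> vle x y -> Mx x <= Mx y.
Proof.
move=> px xy; apply: Mx_le => [|k]; last exact: le_trans (xy k) (Mx_ge y k).
by apply/bigmax_geP; left.
Qed.

Lemma Mx_scal t x : 0 < t -> Mx (fun k => t * x k) = t * Mx x.
Proof.
move=> t0; rewrite /Mx; apply: (big_ind2 (fun a b => a = t * b)) => //.
  by rewrite mulr0.
by move=> a1 b1 a2 b2 -> ->; rewrite maxr_pMr // ltW.
Qed.

Lemma Mx_attained x (i0 : 'I_n) : posvec x -> exists k, Mx x = x k.
Proof.
move=> px; have [k [_ hk]] := @exists_argmax _ _ xpredT x i0 isT.
exists k; apply/eqP; rewrite eq_le Mx_ge andbT; apply: Mx_le => [|j]; last exact: hk.
exact: ltW (px k).
Qed.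

Lemma Mx_pos x (i0 : 'I_n) : posvec x -> 0 < Mx x.
Proof. by move=> px; apply: lt_le_trans (px i0) (Mx_ge x i0). Qed.

Section L.
Variables (g : vec -> vec) (J : {set 'I_n}) (s : R).
Hypotheses (gg : goodf g) (g1 : vle (cst 1) (g (cst 1))) (s1 : 1 <= s)
  (J0 : J != finset.set0)
  (hA : forall y, posvec y -> exists j, j \in J /\ y j <= g y j).

Definition yv (x : vec) : vec := fun l => if l \in J then x l else Mx x / s.

Definition Psi (x : vec) : vec := fun k =>
  if k \in J then g (yv x) k + 2^-1 * Num.max (x k) (Mx x / s) else 2^-1 * Mx x.

Lemma Lsub : exists a, [/\ vle (cst 1) a, vle a (cst s), (forall k, k \notin J -> a k = 1),
  (exists j, j \in J /\ a j = s) & vle a (g a)].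
Proof.
have [mp op hg] := gg.
have [i0 i0J] := not0_ex J0.
have s0 : 0 < s by exact: lt_le_trans ltr01 s1.
have h20 : 0 < 2^-1 :> R by rewrite invr_gt0.
have pyv : forall x, posvec x -> posvec (yv x).
  move=> x px l; rewrite /yv; case: (l \in J) => //; rewrite divr_gt0 //; exact: Mx_pos i0 px.
have gP : goodf Psi.
  split.
  - move=> x px k; rewrite /Psi; case: (k \in J).
      apply: addr_gt0; first exact: mp _ (pyv _ px) k.
      by rewrite mulr_gt0 // lt_max (px k).
    by rewrite mulr_gt0 // (Mx_pos i0 px).
  - move=> x y px py xy k; have Mxy := Mx_mono px xy; rewrite /Psi; case: (k \in J).
      apply: lerD; first apply: op; try exact: pyv.
        move=> l; rewrite /yv; case: (l \in J) => //; by rewrite ler_pM2r ?invr_gt0.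
      rewrite ler_pM2l //; apply: le_max2 => //; by rewrite ler_pM2r ?invr_gt0.
    by rewrite ler_pM2l.
  - move=> t x t0 px; apply: funext => k; rewrite /Psi Mx_scal //.
    have -> : yv (fun i => t * x i) = (fun i => t * yv x i).
      apply: funext => l; rewrite /yv Mx_scal //; case: (l \in J) => //.
      by rewrite mulrA.
    rewrite hg //; last exact: pyv.
    case: (k \in J); last by rewrite mulrCA.
    rewrite mulrDr; congr (_ + _); rewrite mulrCA; congr (_ * _).
    by rewrite (maxr_pMr _ _ (ltW t0)) mulrA.
have cP : Cp Psi.
  move=> K K0 K1.
  have p1 : posvec (cst 1 : vec) by apply: posvec_cst.
  set c := 1 + Mx (Psi (cst 1)).
  set L := 2 * s * (c + 1).
  have hm : 0 <= Mx (Psi (cst 1)) by apply/bigmax_geP; left.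
  have c0 : 0 < c by rewrite /c; lra.
  exists c, (cst 1), (fun k => if k \in K then L else 1); split.
  - exact: p1.
  - move=> k; case: (k \in K) => //; rewrite /L !mulr_gt0 //; lra.
  - move=> i _; rewrite /cst mulr1 /c; apply: le_lt_trans (Mx_ge _ i) _; lra.
  - move=> i iK; rewrite (negbTE iK) mulr1.
    have [k1 k1K] := not0_ex K0.
    set z := fun k => if k \in K then L else 1.
    have ML : L <= Mx z by have := Mx_ge z k1; rewrite /z k1K.
    have pz : posvec z by move=> k; rewrite /z; case: (k \in K) => //; rewrite /L !mulr_gt0 //; lra.
    have hL : c < 2^-1 * (Mx z / s).
      apply: lt_le_trans (_ : 2^-1 * (L / s) <= _); last by rewrite ler_pM2l // ler_pM2r ?invr_gt0.
      rewrite /L; have -> : 2^-1 * (2 * s * (c + 1) / s) = c + 1 by field; rewrite gt_eqF.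
      lra.
    rewrite /Psi; case: (i \in J).
      apply: lt_le_trans hL _; rewrite -[X in X <= _]add0r; apply: lerD.
        exact: ltW (mp _ (pyv _ pz) i).
      by rewrite ler_pM2l // le_max lexx orbT.
    apply: lt_le_trans hL _; rewrite ler_pM2l // ler_pdivrMr // ler_peMr //.
    exact: le_trans (ltW (pz k1)) (Mx_ge z k1).
have [x [px [rho hx]]] := existsE gP cP.
set M := Mx x.
have M0 : 0 < M := Mx_pos i0 px.
have hxk : forall k, Psi x k = rho * x k by move=> k; rewrite hx.
have [j [jJ hj]] := hA (pyv _ px).
have rho32 : 3 / 2 <= rho.
  have := hxk j; rewrite /Psi jJ => e.
  have := le_max (x j) (x j) (M / s); rewrite lexx /= => /idP hmx.
  have xj := px j.
  have : x j + 2^-1 * x j <= rho * x j.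
    rewrite -e; apply: lerD; first by move: hj; rewrite /yv jJ.
    by rewrite ler_pM2l.
  move=> h; rewrite -(ler_pM2r xj); apply: le_trans h; lra.
have [k0 hk0] := Mx_attained i0 px.
have k0J : k0 \in J.
  apply: contraT => k0n; have := hxk k0; rewrite /Psi (negbTE k0n) hk0 => e.
  have xk := px k0.
  have : rho = 2^-1 by apply: (mulIf (lt0r_neq0 xk)); rewrite -e mulrC.
  move=> r; rewrite r in rho32; lra.
have gyv : forall k, k \in J -> M / s <= x k -> x k <= g (yv x) k.
  move=> k kJ hk; have := hxk k; rewrite /Psi kJ -/M.
  have -> : Num.max (x k) (M / s) = x k by apply/max_idPl.
  have xk := px k; move=> e.
  have : g (yv x) k = (rho - 2^-1) * x k by rewrite mulrBl -e; ring.
  move=> ->; have h2 : 1 <= rho - 2^-1 by rewrite -div1r; lra.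
  by rewrite ler_peMl // ltW.
pose a : vec := fun k => if k \in J then Num.max (s * x k / M) 1 else 1.
have a1 : vle (cst 1) a by move=> k; rewrite /a /cst; case: (k \in J) => //; rewrite le_max lexx orbT.
have pa : posvec a by move=> k; apply: lt_le_trans ltr01 (a1 k).
exists a; split => //.
- move=> k; rewrite /a /cst; case: (k \in J) => //; rewrite ge_max s1 andbT.
  by rewrite ler_pdivrMr // ler_pM2l //; exact: Mx_ge.
- by move=> k kJ; rewrite /a (negbTE kJ).
- exists k0; split => //; rewrite /a k0J -hk0 -/M mulfK ?gt_eqF //.
  exact/max_idPl.
- have ga1 : vle (cst 1) (g a).
    apply: vle_trans g1 _; apply: op => //; exact: posvec_cst.
  move=> k; case: (boolP (k \in J)) => kJ; last by rewrite /a (negbTE kJ); exact: ga1.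
  rewrite {1}/a kJ ge_max; apply/andP; split; last exact: ga1.
  case: (lerP 1 (s * x k / M)) => hk; last exact: le_trans (ltW hk) (ga1 k).
  have sM : 0 < s / M by rewrite divr_gt0.
  have le1 : vle (scal (s / M) (yv x)) a.
    move=> l; rewrite /scal /yv /a; case: (l \in J).
      by rewrite le_max mulrAC mulrC mulrA lexx.
    by rewrite mulrA divfK ?gt_eqF // divff ?gt_eqF.
  have := op_scal' gg sM pa (pyv _ px) le1 k; rewrite /scal => h.
  apply: le_trans h; rewrite mulrAC ler_pM2l //; apply: gyv => //.
  by rewrite ler_pdivrMr // mulrC; rewrite ler_pdivlMr // mul1r in hk.

Qed.

End L.
End F.


Section G.
Variables (R : realType) (n : nat).
Notation vec := ('I_n -> R).
Notation evec := ('I_n -> \bar R).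

Lemma ext0_le (f : vec -> vec) (x y : vec) (i0 : 'I_n) : goodf f -> posvec y ->
  (forall k, 0 <= x k) -> vle x y -> forall i, ext0 f x i <= f y i.
Proof.
move=> gf py x0 xy i; have [mp op hg] := gf.
have [k0 [_ hk0]] := @exists_argmin _ _ xpredT y i0 isT.
set m := y k0; have m0 : 0 < m := py k0.
have pxe : forall e, 0 < e -> posvec (fun k => x k + e).
  by move=> e e0 k; apply: lt_le_trans e0 _; rewrite lerDr.
have fy0 := mp y py i.
apply/ler_addgt0Pr => eps eps0.
set e := eps * m / f y i.
have e0 : 0 < e by rewrite /e !mulr_gt0 ?invr_gt0.
have hlb : has_lbound [set f (fun k => x k + e0') i | e0' in [set e1 : R | 0 < e1]].
  by exists 0 => _ [e1 e1p <-]; exact: ltW (mp _ (pxe _ e1p) i).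
apply: le_trans (ge_inf hlb (_ : _ (f (fun k => x k + e) i))) _.
  by exists e.
have t0 : 0 < 1 + e / m by rewrite addr_gt0 // divr_gt0.
have : vle (fun k => x k + e) (scal (1 + e / m) y).
  move=> k; rewrite /scal mulrDl mul1r; apply: lerD => //.
  by rewrite mulrAC ler_pdivlMr // ler_pM2l // hk0.
move=> /(op_scal gf t0 (pxe _ e0) py) /(_ i); rewrite /scal => h.
apply: le_trans h _; rewrite mulrDl mul1r lerD2l /e.
by rewrite le_eqVlt; apply/orP; left; apply/eqP; field; rewrite ?gt_eqF.
Qed.


Lemma trunc_ge (z : vec) (w : evec) (t : R) : (forall k, z k <= t) ->
  (forall k, ((z k)%:E <= w k)%E) -> vle z (trunc w t).
Proof.
move=> zt zw k; rewrite /trunc; move: (zw k) (zt k); case: (w k) => [r| |] //= h1 h2.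
all: try by rewrite -EFin_min /= le_min -lee_fin h1 h2.
all: try by rewrite (min_idPr (leey _)).
Qed.

Lemma trunc_pos (w : evec) (t : R) : 0 < t -> (forall k, (0 < w k)%E) -> posvec (trunc w t).
Proof.
move=> t0 w0 k; rewrite /trunc; move: (w0 k); case: (w k) => [r| |] //= h.
all: try by rewrite -EFin_min /= lt_min -lte_fin h t0.
all: try by rewrite (min_idPr (leey _)).
Qed.

Lemma trunc_mono (w : evec) (t t' : R) : t <= t' -> (forall k, (0 < w k)%E) -> vle (trunc w t) (trunc w t').
Proof.
move=> tt w0 k; rewrite /trunc; move: (w0 k); case: (w k) => [r| |] //= h.
all: try by rewrite -!EFin_min /=; apply: le_min2.
all: try by rewrite !(min_idPr (leey _)).
Qed.

Lemma extinf_ge (f : vec -> vec) (z : vec) (w : evec) (i0 : 'I_n) : goodf f -> posvec z ->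
  (forall k, ((z k)%:E <= w k)%E) -> forall i, ((f z i)%:E <= extinf f w i)%E.
Proof.
move=> gf pz zw i; have [mp op hg] := gf.
set t := Mx z.
have t0 : 0 < t := Mx_pos i0 pz.
have zt := trunc_ge (@Mx_ge _ _ z) zw.
have pt : posvec (trunc w t) by move=> k; exact: lt_le_trans (pz k) (zt k).
apply: (@le_trans _ _ (f (trunc w t) i)%:E).
  by rewrite lee_fin; apply: op.
by apply: ereal_sup_ubound; exists t.
Qed.


Lemma P0_ge0 (J : {set 'I_n}) (x : vec) : posvec x -> forall k, 0 <= P0 J x k.
Proof. by move=> px k; rewrite /P0; case: (k \in J) => //; exact: ltW. Qed.

Lemma P0_le (J : {set 'I_n}) (x : vec) : posvec x -> vle (P0 J x) x.
Proof. by move=> px k; rewrite /P0; case: (k \in J) => //; exact: ltW. Qed.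

Lemma f0J_le (f : vec -> vec) (J : {set 'I_n}) y (i0 : 'I_n) : goodf f -> posvec y ->
  forall i, f0J f J y i <= if i \in J then f y i else 0.
Proof.
move=> gf py i; rewrite /f0J /P0; case: (i \in J) => //.
exact: ext0_le i0 gf py (P0_ge0 J py) (P0_le J py) i.
Qed.

Lemma cwU_lt (f : vec -> vec) (J : {set 'I_n}) y mu (i0 : 'I_n) : goodf f -> posvec y -> 0 < mu ->
  (forall j, j \in J -> f y j < mu * y j) -> (cw_upper (f0J f J) < mu%:E)%E.
Proof.
move=> gf py mu0 hy.
apply: (@le_lt_trans _ _ (\big[Num.max/0]_i (f0J f J y i / y i))%:E).
  by apply: ereal_inf_lbound; exists y.
rewrite lte_fin; apply: bigmax_lt => // i _.
have := @f0J_le f J y i0 gf py i; case: (boolP (i \in J)) => iJ h.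
  by rewrite ltr_pdivrMr //; apply: le_lt_trans h _; exact: hy.
by rewrite ltr_pdivrMr //; apply: le_lt_trans h _; rewrite mulr_gt0.
Qed.

Lemma cwU_le (f : vec -> vec) (J : {set 'I_n}) y mu (i0 : 'I_n) : goodf f -> posvec y -> 0 <= mu ->
  (forall j, f y j <= mu * y j) -> (cw_upper (f0J f J) <= mu%:E)%E.
Proof.
move=> gf py mu0 hy.
apply: (@le_trans _ _ (\big[Num.max/0]_i (f0J f J y i / y i))%:E).
  by apply: ereal_inf_lbound; exists y.
rewrite lee_fin; apply: bigmax_le => // i _.
have := @f0J_le f J y i0 gf py i; case: (boolP (i \in J)) => iJ h.
  by rewrite ler_pdivrMr //; apply: le_trans h _; exact: hy.
by rewrite ler_pdivrMr //; apply: le_trans h _; rewrite mulr_ge0 // ltW.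
Qed.

Lemma finf_ge (f : vec -> vec) (J : {set 'I_n}) z (i0 : 'I_n) : goodf f -> posvec z ->
  forall i, i \notin J -> ((f z i)%:E <= finfJ f (~: J) (fun k => (z k)%:E) i)%E.
Proof.
move=> gf pz i iJ; rewrite /finfJ /Pinf inE iJ /=.
apply: (extinf_ge i0 gf pz) => k; rewrite /Pinf inE; case: (k \in J) => //=.
exact: leey.
Qed.

Lemma finf_J (f : vec -> vec) (J : {set 'I_n}) x i : i \in J -> finfJ f (~: J) x i = +oo%E.
Proof. by move=> iJ; rewrite /finfJ /Pinf inE iJ. Qed.

Lemma cwL_gt (f : vec -> vec) (J : {set 'I_n}) z mu (i0 : 'I_n) : goodf f -> posvec z ->
  (forall i, i \notin J -> mu * z i < f z i) -> (mu%:E < cw_lower (finfJ f (~: J)))%E.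
Proof.
move=> gf pz hz.
apply: (@lt_le_trans _ _ (\big[Order.min/+oo%E]_i
   (finfJ f (~: J) (fun k => (z k)%:E) i * ((z i)^-1)%:E))%E); last first.
  by apply: ereal_sup_ubound; exists z.
apply: lt_bigmin; first exact: ltry.
move=> i _; case: (boolP (i \in J)) => iJ.
  by rewrite finf_J // gt0_mulye ?lte_fin ?invr_gt0 //; exact: ltry.
rewrite lte_pdivlMr // -EFinM; apply: lt_le_trans (finf_ge i0 gf pz iJ).
by rewrite lte_fin; exact: hz.
Qed.

Lemma cwL_ge (f : vec -> vec) (J : {set 'I_n}) z mu (i0 : 'I_n) : goodf f -> posvec z ->
  (forall i, mu * z i <= f z i) -> (mu%:E <= cw_lower (finfJ f (~: J)))%E.
Proof.
move=> gf pz hz.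
apply: (@le_trans _ _ (\big[Order.min/+oo%E]_i
   (finfJ f (~: J) (fun k => (z k)%:E) i * ((z i)^-1)%:E))%E); last first.
  by apply: ereal_sup_ubound; exists z.
apply: le_bigmin; first exact: leey.
move=> i _; case: (boolP (i \in J)) => iJ.
  by rewrite finf_J // gt0_mulye ?lte_fin ?invr_gt0 //; exact: leey.
rewrite lee_pdivlMr // -EFinM; apply: le_trans (finf_ge i0 gf pz iJ).
by rewrite lee_fin; exact: hz.
Qed.


Lemma ext0_wit (f : vec -> vec) (J : {set 'I_n}) (x : vec) (c : R) : goodf f -> posvec x ->
  (forall j, j \in J -> ext0 f (P0 J x) j < c * x j) ->
  exists y, posvec y /\ forall j, j \in J -> f y j < c * y j.
Proof.
move=> gf px hx; have [mp op hg] := gf.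
have pxe : forall e, 0 < e -> posvec (fun k => P0 J x k + e).
  by move=> e e0 k; apply: lt_le_trans e0 _; rewrite lerDr; exact: P0_ge0.
have he : forall j, exists e, 0 < e /\ (j \in J -> f (fun k => P0 J x k + e) j < c * x j).
  move=> j; case: (boolP (j \in J)) => jJ; last by exists 1; split.
  set E := [set f (fun k => P0 J x k + e) j | e in [set e : R | 0 < e]].
  have hinf : has_inf E.
    split; first by exists (f (fun k => P0 J x k + 1) j), 1 => //; exact: ltr01.
    by exists 0 => _ [e e0 <-]; exact: ltW (mp _ (pxe _ e0) j).
  have h := hx j jJ.
  have ep : 0 < c * x j - inf E by rewrite subr_gt0.
  have [_ [e e0 <-] hlt] := inf_adherent ep hinf.
  exists e; split => // _; move: hlt; rewrite addrCA subrr addr0 => //.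
have [eps heps] := choice he.
set es := \big[Num.min/1]_k eps k.
have es0 : 0 < es by apply: lt_bigmin => // k _; case: (heps k).
have esk : forall k, es <= eps k by move=> k; exact: bigmin_le.
exists (fun k => P0 J x k + es); split; first exact: pxe.
move=> j jJ; have [e0 h] := heps j; have h1 := h jJ.
have h2 : f (fun k => P0 J x k + es) j <= f (fun k => P0 J x k + eps j) j.
  by apply: op; [exact: pxe | exact: pxe | move=> k; rewrite lerD2l].
have c0 : 0 < c.
  have := lt_trans (mp _ (pxe _ es0) j) (le_lt_trans h2 h1).
  by rewrite pmulr_lgt0.
apply: le_lt_trans h2 _; apply: lt_le_trans h1 _.
by rewrite ler_pM2l // /P0 jJ lerDl ltW.
Qed.

Lemma extinf_wit (f : vec -> vec) (J : {set 'I_n}) (z : vec) (c : R) : goodf f -> posvec z -> 0 < c ->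
  (forall i, i \notin J -> ((c * z i)%:E < extinf f (Pinf (~: J) (fun k => (z k)%:E)) i)%E) ->
  exists z', posvec z' /\ forall i, i \notin J -> c * z' i < f z' i.
Proof.
move=> gf pz c0 hz; have [mp op hg] := gf.
set w := Pinf (~: J) (fun k => (z k)%:E).
have w0 : forall k, (0 < w k)%E.
  by move=> k; rewrite /w /Pinf inE; case: (k \in J) => //=; rewrite lte_fin.
have ht : forall i, exists t, 0 < t /\ (i \notin J -> c * z i < f (trunc w t) i).
  move=> i; case: (boolP (i \in J)) => iJ; first by exists 1; split.
  have [_ [t t0 <-]] := ereal_sup_gt (hz i iJ).
  by rewrite lte_fin => h; exists t.
have [tau htau] := choice ht.
set T := \big[Num.max/1]_k tau k.
have T0 : 0 < T by apply: lt_le_trans ltr01 _; apply/bigmax_geP; left.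
have Tk : forall k, tau k <= T by move=> k; exact: (le_bigmax _ tau k).
exists (trunc w T); split; first exact: trunc_pos.
move=> i iJ; have [t0 h] := htau i; have h1 := h iJ.
have h2 : f (trunc w (tau i)) i <= f (trunc w T) i.
  by apply: op; [exact: trunc_pos | exact: trunc_pos | exact: trunc_mono].
apply: le_lt_trans (lt_le_trans h1 h2); rewrite ler_pM2l //.
rewrite /trunc /w /Pinf inE iJ /= -EFin_min /= ge_min lexx //.
Qed.

End G.


Lemma ereal_between (R : realType) (r : R) (e : \bar R) : (r%:E < e)%E ->
  exists c : R, r < c /\ (c%:E < e)%E.
Proof.
case: e => [s| |] //=.
- rewrite lte_fin => h; exists ((r + s) / 2); split; rewrite ?lte_fin; lra.
- by move=> _; exists (r + 1); split; [lra | exact: ltry].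
Qed.

Theorem theorem3p1 (R : realType) (n : nat) (f : ('I_n -> R) -> ('I_n -> R)) :
  maps_pos f -> order_preserving_map f -> homogeneous_map f ->
  (nonempty_bounded_hilbert (pos_eigenvectors f) <->
   forall J : {set 'I_n}, J != finset.set0 -> J != finset.setT ->
     (cw_upper (f0J f J) < cw_lower (finfJ f (~: J)))%E).
Proof.
move=> mp op hg; have gf : goodf f by split.
split.
- move=> [[u [pu [mu hu]]] [M hM]] J J0 J1.
  have [i0 _] := not0_ex J0.
  have hu' : f u = scal mu u by [].
  have mu0 : 0 < mu := eig_pos i0 gf pu hu'.
  have fu : forall i, f u i = mu * u i by move=> i; rewrite hu.
  rewrite ltNge; apply/negP => hle.
  have hA : forall y, posvec y -> exists j, j \in J /\ mu * y j <= f y j.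
    move=> y py; apply: contrapT => H.
    have hy : forall j, j \in J -> f y j < mu * y j.
      move=> j jJ; rewrite ltNge; apply/negP => h; apply: H; by exists j.
    have h1 := cwU_lt i0 gf py mu0 hy.
    have h2 : (mu%:E <= cw_lower (finfJ f (~: J)))%E.
      by apply: (@cwL_ge _ _ f J u mu i0 gf pu) => i; rewrite fu.
    by have := lt_le_trans (le_lt_trans hle h1) h2; rewrite ltxx.
  have hB : forall z, posvec z -> exists i, i \notin J /\ f z i <= mu * z i.
    move=> z pz; apply: contrapT => H.
    have hz : forall i, i \notin J -> mu * z i < f z i.
      move=> i iJ; rewrite ltNge; apply/negP => h; apply: H; by exists i.
    have h1 := cwL_gt i0 gf pz hz.
    have h2 : (cw_upper (f0J f J) <= mu%:E)%E.
      by apply: (@cwU_le _ _ f J u mu i0 gf pu (ltW mu0)) => i; rewrite fu.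
    by have := lt_le_trans (le_lt_trans h2 h1) hle; rewrite ltxx.
  set g := nrm u mu f.
  have gg : goodf g := goodf_nrm gf pu mu0.
  have ugk : forall y : 'I_n -> R, (fun k => u k * y k) = (fun k => u k * y k) by [].
  have g1 : g (cst 1) = cst 1.
    apply: funext => i; rewrite /g /nrm /cst.
    have -> : (fun k => u k * 1) = u by apply: funext => k; rewrite mulr1.
    by rewrite fu divff // gt_eqF // mulr_gt0.
  have hAg : forall y, posvec y -> exists j, j \in J /\ y j <= g y j.
    move=> y py; have puy : posvec (fun k => u k * y k) by move=> k; rewrite mulr_gt0.
    have [j [jJ hj]] := hA _ puy; exists j; split => //.
    rewrite /g /nrm ler_pdivlMr ?mulr_gt0 //; apply: le_trans hj; rewrite le_eqVlt; apply/orP; left.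
    by apply/eqP; ring.
  have hBg : forall y, posvec y -> exists j, j \in ~: J /\ y j <= dual g y j.
    move=> y py; have puy : posvec (fun k => u k * vinv y k).
      by move=> k; rewrite mulr_gt0 // /vinv invr_gt0.
    have [j [jJ hj]] := hB _ puy; exists j; split; first by rewrite inE.
    have := mp _ puy j => h0; have uj := pu j; have yj := py j.
    rewrite /dual /vinv /g /nrm -[X in X <= _]invrK lef_pV2 ?posrE ?invr_gt0 ?divr_gt0 ?mulr_gt0 //.
    rewrite ler_pdivrMr ?mulr_gt0 //; apply: le_trans hj _; rewrite le_eqVlt; apply/orP; left.
    by apply/eqP; rewrite /vinv; field; rewrite ?gt_eqF.
  set s := Num.max 1 (sequences.expR (M + 1)).
  have s1 : 1 <= s by rewrite le_max lexx.
  have s0 : 0 < s by exact: lt_le_trans ltr01 s1.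
  have g1' : vle (cst 1) (g (cst 1)) by rewrite g1.
  have [a [a1 as_ aJc [j [jJ ajs]] asub]] := Lsub gg g1' s1 J0 hAg.
  have gd1 : vle (cst 1) (dual g (cst 1)).
    by move=> k; rewrite /dual /vinv /cst invr1 -/(cst 1 k) g1 /cst invr1.
  have Jc0 : ~: J != finset.set0.
    have [k kJ] := notT_ex J1; apply/set0Pn; exists k; by rewrite inE.
  have [a' [a'1 a's a'J [i [iJ a'is]] a'sub]] := Lsub (goodf_dual gg) gd1 s1 Jc0 hBg.
  have pa' : posvec a' by move=> k; exact: lt_le_trans ltr01 (a'1 k).
  have pa : posvec a by move=> k; exact: lt_le_trans ltr01 (a1 k).
  set b := fun k => s / a' k.
  have pb : posvec b by move=> k; rewrite /b divr_gt0.
  have gb : vle (g b) b.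
    have e : b = scal s (vinv a') by apply: funext => k; rewrite /b /scal /vinv.
    rewrite e homog_scal //; last exact: posvec_inv.
    move=> k; rewrite /scal ler_pM2l //; have := a'sub k; rewrite /dual /vinv.
    have gk := (let: And3 m _ _ := gg in m) _ (posvec_inv pa') k.
    by rewrite -[X in X <= _ -> _]invrK lef_pV2 ?posrE ?invr_gt0 // /vinv.
  have ab : vle a b.
    move=> k; rewrite /b; case: (boolP (k \in J)) => kJ.
      have -> : a' k = 1 by apply: a'J; rewrite inE kJ.
      by rewrite divr1; exact: as_.
    rewrite aJc // ler_pdivlMr // mul1r; exact: a's.
  have [v [bv hv]] : exists v, box a b v /\ g v = v.
    have [mg opg hgg] := gg.
    have boxpos : forall x, box a b x -> posvec x.
      by move=> x bx k; apply: lt_le_trans (pa k) (proj1 (bx k)).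
    apply: tarski => //.
      by move=> x y bx by' xy; apply: opg => //; apply: boxpos.
    move=> x bx k; split.
      apply: le_trans (asub k) _; apply: opg => //; first exact: boxpos.
      by move=> l; case: (bx l).
    apply: le_trans _ (gb k); apply: opg => //; first exact: boxpos.
    by move=> l; case: (bx l).
  have pv : posvec v by move=> k; apply: lt_le_trans (pa k) (proj1 (bv k)).
  set w := fun k => u k * v k.
  have pw : posvec w by move=> k; rewrite mulr_gt0.
  have Ew : pos_eigenvectors f w.
    split => //; exists mu; apply: funext => k.
    have := congr1 (fun h => h k) hv; rewrite /g /nrm -/w => e.
    have uk := pu k.
    have e2 : f w k = v k * (mu * u k) by rewrite -e divfK // gt_eqF // mulr_gt0.
    by rewrite e2 /w; ring.
  have Eu : pos_eigenvectors f u by split => //; exists mu.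
  have hd := hM u w Eu Ew.
  have vj : s <= v j by rewrite -ajs; exact: proj1 (bv j).
  have vi : v i <= 1.
    have sd : s / s = 1 by rewrite divff // lt0r_neq0.
    by have := proj2 (bv i); rewrite /b a'is sd.
  have : M + 1 <= hilbert_dist u w.
    rewrite /hilbert_dist.
    have hterm : s <= w j * u i / (u j * w i).
      have -> : w j * u i / (u j * w i) = v j / v i.
        by rewrite /w; have := pu i; have := pu j; have := pv i; have := pv j; move=> *; field; rewrite ?gt_eqF.
      by apply: le_trans vj _; rewrite ler_pdivlMr // ger_pMr.
    have hbig : s <= \big[Num.max/1]_i0 \big[Num.max/1]_j0 (w i0 * u j0 / (u i0 * w j0)).
      apply: le_trans hterm _; apply: le_trans (le_bigmax _ (fun j0 => w j * u j0 / (u j * w j0)) i) _.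
      exact: (le_bigmax _ (fun i0 => \big[Num.max/1]_j0 (w i0 * u j0 / (u i0 * w j0))) j).
    apply: le_trans (_ : ln s <= _).
      rewrite -{1}(expRK (M + 1)) ler_ln ?posrE ?expR_gt0 //; rewrite le_max lexx orbT //.
    by rewrite ler_ln ?posrE // (lt_le_trans s0 hbig).
  move=> h; have := le_trans h hd; lra.
- move=> H.
  have cp : Cp f.
    move=> K K0 K1; have h := H K K0 K1.
    have [_ [x px <-] hx] := ereal_inf_lt h.
    set r := \big[Num.max/0]_i (f0J f K x i / x i) in hx.
    have r0 : 0 <= r by apply/bigmax_geP; left.
    have [c [rc hc]] := ereal_between hx.
    have c0 : 0 < c := le_lt_trans r0 rc.
    have [_ [z pz <-] hz] := ereal_sup_gt hc.
    have [y [py hy]] : exists y, posvec y /\ forall j, j \in K -> f y j < c * y j.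
      apply: (ext0_wit gf px) => j jK.
      have hj : f0J f K x j / x j <= r := le_bigmax 0 (fun i => f0J f K x i / x i) j.
      have := le_lt_trans hj rc; rewrite /f0J /P0 jK ltr_pdivrMr //.
    have [z' [pz' hz']] : exists z', posvec z' /\ forall i, i \notin K -> c * z' i < f z' i.
      apply: (extinf_wit gf pz c0) => i iK.
      move/bigmin_gtP: hz => [_ /(_ i isT)].
      by rewrite lte_pdivlMr // -EFinM /finfJ /Pinf inE iK.
    by exists c, y, z'.
  split; first exact: existsE gf cp.
  exact: bounded gf cp.
Qed.
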